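(* Let $0<\alpha<1$ and $\epsilon\ge 0$. For $i\in[l]$ let $\rho_i$ be a quantum state on a finite-dimensional Hilbert space $\mathcal H$ and $\Pi_i$ an orthogonal projector on $\mathcal H$ with $\operatorname{Tr}[\Pi_i\rho_i]\ge 1-\epsilon$. Let $\tilde{\mathcal H}=\mathcal H\oplus\mathcal H_1\oplus\cdots\oplus\mathcal H_l$ be as in the context, and view operators on $\mathcal H$ as operators on $\tilde{\mathcal H}$ via the identity embedding. Then there is an orthogonal projector $\hat\Pi$ on $\tilde{\mathcal H}$ such that $\operatorname{Tr}[\hat\Pi\rho_i]\ge 1-\epsilon-\alpha$ for all $i\in[l]$, and for every state $\sigma$ on $\mathcal H$, $$\operatorname{Tr}[\hat\Pi\sigma]\ \le\ \frac{1-\alpha}{\alpha}\sum_{i\in[l]}\operatorname{Tr}[\Pi_i\sigma].$$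
   Context: $\mathcal{H}_1,\ldots,\mathcal{H}_l$ are Hilbert spaces each of dimension $\dim\mathcal{H}$ and $\tilde{\mathcal{H}}:=\mathcal{H}\oplus\mathcal{H}_1\oplus\cdots\oplus\mathcal{H}_l$ is the orthogonal direct sum. *)

(* Defs.v *)
(* Scalars: an arbitrary numClosedFieldType C (e.g. algC),
   i.e. an algebraically closed field with an order/norm and conjugation. *)
From mathcomp Require Import all_boot all_order all_algebra.
Set Implicit Arguments. Unset Strict Implicit. Unset Printing Implicit Defensive.
Import Order.TTheory GRing.Theory Num.Theory.
Local Open Scope ring_scope.

Definition adjmx (C : numClosedFieldType) (m n : nat) (A : 'M[C]_(m, n)) : 'M[C]_(n, m) :=
  (map_mx Num.conj A)^T.

Definition is_psd (C : numClosedFieldType) (n : nat) (A : 'M[C]_n) : Prop :=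
  adjmx A = A /\ forall v : 'cV[C]_n, 0 <= (adjmx v *m A *m v) 0 0.

Definition is_state (C : numClosedFieldType) (n : nat) (A : 'M[C]_n) : Prop :=
  is_psd A /\ \tr A = 1.

Definition is_proj (C : numClosedFieldType) (n : nat) (P : 'M[C]_n) : Prop :=
  adjmx P = P /\ P *m P = P.

(* H~ = H (+) H_1 (+) ... (+) H_l, each of dimension d, has dimension d + l*d;
   operators on H embed into the top-left block (identity embedding of H). *)
Definition embed (C : numClosedFieldType) (d l : nat) (A : 'M[C]_d) : 'M[C]_(d + l * d) :=
  block_mx A 0 0 0.

(* Main.v *)
Require Import Defs.
From mathcomp Require Import all_boot all_order all_algebra.
From mathcomp Require Import ring.
Set Implicit Arguments. Unset Strict Implicit. Unset Printing Implicit Defensive.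
Import Order.TTheory GRing.Theory Num.Theory.
Local Open Scope ring_scope.
Section Lib.
Variable C : numClosedFieldType.

Lemma adjmxK m n (A : 'M[C]_(m,n)) : adjmx (adjmx A) = A.
Proof. by apply/matrixP=> i j; rewrite !mxE conjCK. Qed.

Lemma adjmxM m n p (A : 'M[C]_(m,n)) (B : 'M[C]_(n,p)) :
  adjmx (A *m B) = adjmx B *m adjmx A.
Proof. by rewrite /adjmx map_mxM trmx_mul. Qed.

Lemma adjmxD m n (A B : 'M[C]_(m,n)) : adjmx (A + B) = adjmx A + adjmx B.
Proof. by apply/matrixP=> i j; rewrite !mxE rmorphD. Qed.

Lemma adjmxN m n (A : 'M[C]_(m,n)) : adjmx (- A) = - adjmx A.
Proof. by apply/matrixP=> i j; rewrite !mxE rmorphN. Qed.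

Lemma adjmxB m n (A B : 'M[C]_(m,n)) : adjmx (A - B) = adjmx A - adjmx B.
Proof. by rewrite adjmxD adjmxN. Qed.

Lemma adjmxZ m n k (A : 'M[C]_(m,n)) : adjmx (k *: A) = k^* *: adjmx A.
Proof. by apply/matrixP=> i j; rewrite !mxE rmorphM. Qed.

Lemma adjmx1 n : adjmx (1%:M : 'M[C]_n) = 1%:M.
Proof. by apply/matrixP=> i j; rewrite !mxE eq_sym; case: eqP; rewrite ?rmorph1 ?rmorph0. Qed.

Lemma adjmx0 m n : adjmx (0 : 'M[C]_(m,n)) = 0.
Proof. by apply/matrixP=> i j; rewrite !mxE rmorph0. Qed.

Lemma adjmx_block m1 m2 n1 n2 (A : 'M[C]_(m1,n1)) (B : 'M[C]_(m1,n2))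
  (D : 'M[C]_(m2,n1)) (E : 'M[C]_(m2,n2)) :
  adjmx (block_mx A B D E) = block_mx (adjmx A) (adjmx D) (adjmx B) (adjmx E).
Proof. by rewrite /adjmx map_block_mx tr_block_mx. Qed.

Lemma adjmx_diag n (x : 'rV[C]_n) : (forall k, x 0 k \is Num.real) ->
  adjmx (diag_mx x) = diag_mx x.
Proof.
move=> xr; apply/matrixP=> i j; rewrite !mxE eq_sym.
by case: eqP => [->|]; rewrite ?mulr1n ?mulr0n ?conj_Creal ?rmorph0.
Qed.

Definition qf n (A : 'M[C]_n) (v : 'cV[C]_n) := (adjmx v *m A *m v) 0 0.

Lemma psd_add n (A B : 'M[C]_n) : is_psd A -> is_psd B -> is_psd (A + B).
Proof.
move=> [hA pA] [hB pB]; split; first by rewrite adjmxD hA hB.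
by move=> v; rewrite mulmxDr mulmxDl mxE addr_ge0.
Qed.

Lemma psd0 n : is_psd (0 : 'M[C]_n).
Proof. by split; [rewrite adjmx0|move=> v; rewrite mulmx0 mul0mx mxE]. Qed.

Lemma psd_scale n k (A : 'M[C]_n) : 0 <= k -> is_psd A -> is_psd (k *: A).
Proof.
move=> k0 [hA pA]; split; first by rewrite adjmxZ hA conj_Creal ?ger0_real.
by move=> v; rewrite -scalemxAr -scalemxAl mxE mulr_ge0.
Qed.

Lemma psd_sum n (I : finType) (P : pred I) (F : I -> 'M[C]_n) :
  (forall i, P i -> is_psd (F i)) -> is_psd (\sum_(i | P i) F i).
Proof.
move=> h; apply: (big_ind (fun M => is_psd M)) => //; first exact: psd0.
exact: psd_add.
Qed.

Lemma adj_mul_ge0 n (w : 'cV[C]_n) : 0 <= (adjmx w *m w) 0 0.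
Proof.
rewrite mxE; apply: sumr_ge0 => i _; rewrite !mxE mulrC; exact: mul_conjC_ge0.
Qed.

Lemma psd_congr m n (P : 'M[C]_m) (Q : 'M[C]_(m,n)) :
  is_psd P -> is_psd (adjmx Q *m P *m Q).
Proof.
move=> [hP pP]; split; first by rewrite !adjmxM adjmxK hP mulmxA.
by move=> v; have := pP (Q *m v); rewrite adjmxM !mulmxA.
Qed.

Lemma psd_proj n (P : 'M[C]_n) : is_proj P -> is_psd P.
Proof.
move=> [hP pP]; split => // v.
have -> : adjmx v *m P *m v = adjmx (P *m v) *m (P *m v).
  by rewrite adjmxM hP -!mulmxA (mulmxA P P) pP.
exact: adj_mul_ge0.
Qed.

Lemma psd_diag n (Q : 'M[C]_n) k : is_psd Q -> 0 <= Q k k.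
Proof.
move=> [_ pQ]; have := pQ (delta_mx k 0).
have -> : adjmx (delta_mx k 0 : 'cV[C]_n) = delta_mx 0 k.
  apply/matrixP=> i j; rewrite !mxE; case: eqP; case: eqP => //= *;
  by rewrite ?rmorph1 ?rmorph0 ?mulr1n ?mulr0n.
by rewrite -rowE -colE !mxE.
Qed.

End Lib.
Section Spec.
Variable C : numClosedFieldType.

Lemma adjmxE m n (A : 'M[C]_(m,n)) : adjmx A = (A ^t* )%sesqui.
Proof. by rewrite /adjmx map_trmx. Qed.

Definition Gm n (U : 'M[C]_n) (x : 'rV[C]_n) := adjmx U *m diag_mx x *m U.

Definition unitary n (U : 'M[C]_n) := U *m adjmx U = 1%:M /\ adjmx U *m U = 1%:M.

Lemma herm_spectral n (A : 'M[C]_n) : adjmx A = A ->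
  exists U x, unitary U /\ A = Gm U x.
Proof.
move=> hA.
have nA : A \is normalmx by apply/normalmxP; rewrite -adjmxE hA.
have uU := spectral_unitarymx A.
have e1 : spectralmx A *m adjmx (spectralmx A) = 1%:M.
  by rewrite adjmxE; apply/unitarymxP.
exists (spectralmx A), (spectral_diag A); split; first by split=> //; exact: mulmx1C.
rewrite /Gm adjmxE -invmx_unitary //; exact/orthomx_spectralP.
Qed.

Lemma Gm_mul n (U : 'M[C]_n) x y : unitary U ->
  Gm U x *m Gm U y = Gm U (\row_k (x 0 k * y 0 k)).
Proof.
move=> [u1 u2]; rewrite /Gm.
rewrite !mulmxA -[adjmx U *m diag_mx x *m U *m adjmx U]mulmxA u1 mulmx1.
by rewrite -(mulmxA (adjmx U)) mulmx_diag.
Qed.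

Lemma diag_mxD' n (x y : 'rV[C]_n) : diag_mx (x + y) = diag_mx x + diag_mx y.
Proof. by apply/matrixP=> i j; rewrite !mxE mulrnDl. Qed.

Lemma Gm_add n (U : 'M[C]_n) x y : Gm U x + Gm U y = Gm U (x + y).
Proof. by rewrite /Gm diag_mxD' mulmxDr mulmxDl. Qed.

Lemma Gm_scale n (U : 'M[C]_n) k x : k *: Gm U x = Gm U (k *: x).
Proof.
rewrite /Gm.
have -> : diag_mx (k *: x) = k *: diag_mx x.
  by apply/matrixP=> i j; rewrite !mxE mulrnAr.
by rewrite scalemxAl scalemxAr.
Qed.

Lemma Gm_one n (U : 'M[C]_n) : unitary U -> Gm U (const_mx 1) = 1%:M.
Proof.
move=> [u1 u2]; rewrite /Gm; have -> : diag_mx (const_mx 1 : 'rV[C]_n) = 1%:M.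
  by apply/matrixP=> i j; rewrite !mxE.
by rewrite mulmx1.
Qed.

Lemma Gm_herm n (U : 'M[C]_n) (x : 'rV[C]_n) : (forall k, x 0 k \is Num.real) ->
  adjmx (Gm U x) = Gm U x.
Proof. by move=> xr; rewrite /Gm !adjmxM adjmxK adjmx_diag // mulmxA. Qed.

Lemma Gm_psd n (U : 'M[C]_n) (x : 'rV[C]_n) : (forall k, 0 <= x 0 k) -> is_psd (Gm U x).
Proof.
move=> x0; rewrite /Gm; apply: psd_congr; split.
  by apply: adjmx_diag => k; exact: ger0_real.
move=> v; rewrite mul_mx_diag mxE; apply: sumr_ge0 => i _; rewrite !mxE.
by rewrite mulrAC; apply: mulr_ge0 => //; rewrite mulrC; exact: mul_conjC_ge0.
Qed.

Lemma tr_psd n (P R : 'M[C]_n) : is_psd P -> is_psd R -> 0 <= \tr (P *m R).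
Proof.
move=> pP pR; have [U [x [[u1 u2] eR]]] := herm_spectral pR.1.
have eD : diag_mx x = U *m R *m adjmx U.
  by rewrite eR /Gm !mulmxA u1 mul1mx -mulmxA u1 mulmx1.
have pQ : is_psd (U *m P *m adjmx U).
  by have := psd_congr (adjmx U) pP; rewrite adjmxK.
have pD : is_psd (diag_mx x) by rewrite eD; have := psd_congr (adjmx U) pR; rewrite adjmxK.
have -> : \tr (P *m R) = \tr (U *m P *m adjmx U *m diag_mx x).
  by rewrite eR /Gm !mulmxA mxtrace_mulC !mulmxA.
rewrite mul_mx_diag /mxtrace; apply: sumr_ge0 => i _; rewrite mxE.
apply: mulr_ge0; first exact: psd_diag i pQ.
by have := psd_diag i pD; rewrite mxE eqxx mulr1n.
Qed.

End Spec.

Lemma Gm_sub (C : numClosedFieldType) n (U : 'M[C]_n) x y : Gm U x - Gm U y = Gm U (x - y).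
Proof.
rewrite /Gm -mulmxBl -mulmxBr; congr (_ *m _ *m _).
by apply/matrixP=> i j; rewrite !mxE mulrnBl.
Qed.

Section More.
Variable C : numClosedFieldType.

Lemma lc_mul n (P : 'M[C]_n) x y z w : P *m P = P ->
  (x *: 1%:M + y *: P) *m (z *: 1%:M + w *: P) = (x*z) *: 1%:M + (x*w + y*z + y*w) *: P.
Proof.
move=> PP; rewrite mulmxDl !mulmxDr -!scalemxAl -!scalemxAr !mul1mx !mulmx1 PP !scalerA.
by rewrite !scalerDl !addrA.
Qed.

Lemma key_id n (X Xi Y : 'M[C]_n) : Xi *m X = 1%:M -> X *m Xi = 1%:M ->
  (Y - X) + (Y - X) *m Xi *m (Y - X) = Y *m Xi *m Y - Y.
Proof.
move=> h1 h2; rewrite !mulmxBl !mulmxBr h2 mul1mx -(mulmxA Y Xi X) h1 mulmx1.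
by rewrite mul1mx addrC subrK.
Qed.

Lemma key_id2 n (Y Yi Xi : 'M[C]_n) : Yi *m Y = 1%:M -> Y *m Yi = 1%:M ->
  Yi *m (Y *m Xi *m Y - Y) *m Yi = Xi - Yi.
Proof.
move=> h1 h2; rewrite mulmxBr mulmxBl h1 mul1mx !mulmxA h1 mul1mx -mulmxA h2 mulmx1.
by [].
Qed.

End More.

Theorem corollary2 (C : numClosedFieldType) (d l : nat) (alpha eps : C)
  (rho Pi : 'I_l -> 'M[C]_d) :
  0 < alpha -> alpha < 1 -> 0 <= eps ->
  (forall i, is_state (rho i)) ->
  (forall i, is_proj (Pi i)) ->
  (forall i, 1 - eps <= \tr (Pi i *m rho i)) ->
  exists Pihat : 'M[C]_(d + l * d),
    is_proj Pihat /\
    (forall i, 1 - eps - alpha <= \tr (Pihat *m embed l (rho i))) /\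
    (forall sigma : 'M[C]_d, is_state sigma ->
       \tr (Pihat *m embed l sigma)
         <= (1 - alpha) / alpha * \sum_(i < l) \tr (Pi i *m sigma)).
Proof.
move=> a0 a1 e0 hrho hPi htr.
case: l rho Pi hrho hPi htr => [|l'] rho Pi hrho hPi htr.
  exists 0; split; first by split; rewrite ?adjmx0 ?mul0mx.
  split; first by case.
  by move=> sigma _; rewrite big_ord0 mulr0 mul0mx mxtrace0.
pose S := \sum_i Pi i.
have pS : is_psd S by apply: psd_sum => i _; exact: psd_proj.
have [U [s [uU eS]]] := herm_spectral pS.1.
have [u1 u2] := uU.
have s0 : forall k, 0 <= s 0 k.
  move=> k; have := psd_diag k (psd_congr (adjmx U) pS).
  by rewrite adjmxK eS /Gm !mulmxA u1 mul1mx -mulmxA u1 mulmx1 mxE eqxx mulr1n.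
pose c := alpha / (1 - alpha).
have a1' : 0 < 1 - alpha by rewrite subr_gt0.
have c0 : 0 < c by rewrite divr_gt0.
have ct : (1 + c)^-1 = 1 - alpha.
  have h : 1 - alpha != 0 by rewrite gt_eqF.
  rewrite /c; field; rewrite ?h //.
  by rewrite subrK oner_neq0.
have sc0 : forall k, 0 < s 0 k + c by move=> k; rewrite ltr_wpDl.
pose fa k := s 0 k / (s 0 k + c).
have fa0 : forall k, 0 <= fa k by move=> k; rewrite divr_ge0 // ltW.
have fa1 : forall k, fa k <= 1.
  by move=> k; rewrite /fa ler_pdivrMr // mul1r lerDl (ltW c0).
have fa1' : forall k, fa k = 1 - c * (s 0 k + c)^-1.
  by move=> k; rewrite /fa; have h := lt0r_neq0 (sc0 k); field.
pose fb k := sqrtC (fa k * (1 - fa k)).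
have fab0 : forall k, 0 <= fa k * (1 - fa k) by move=> k; rewrite mulr_ge0 ?subr_ge0.
have fbb : forall k, fb k * fb k = fa k * (1 - fa k).
  by move=> k; rewrite -expr2 sqrtCK.
have fbr : forall k, fb k \is Num.real by move=> k; rewrite ger0_real // sqrtC_ge0.
pose va := \row_k fa k; pose vb := \row_k fb k; pose va' := \row_k (1 - fa k).
pose J : 'M[C]_(d, l'.+1 * d) := row_mx (1%:M : 'M[C]_d) (0 : 'M[C]_(d, l' * d)).
have JJ : J *m adjmx J = 1%:M.
  rewrite /J /adjmx map_row_mx tr_row_mx mul_row_col.
  by rewrite -/(adjmx _) -/(adjmx _) adjmx1 adjmx0 mulmx1 mulmx0 addr0.
pose T : 'M[C]_(d + l'.+1 * d, d + d) := block_mx 1%:M 0 0 (adjmx J).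
have TT : adjmx T *m T = 1%:M.
  rewrite /T adjmx_block adjmxK adjmx1 !adjmx0 mulmx_block.
  rewrite !mulmx0 !mul0mx !mulmx1 !addr0 !add0r JJ.
  by rewrite -scalar_mx_block.
pose M := block_mx (Gm U va) (Gm U vb) (Gm U vb) (Gm U va').
have hM : adjmx M = M.
  rewrite /M adjmx_block !Gm_herm // => k; rewrite mxE ?fbr // ger0_real // ?subr_ge0 ?fa1 //.
have MM : M *m M = M.
  rewrite /M mulmx_block !Gm_mul // !Gm_add.
  congr block_mx; congr Gm; apply/rowP => j; rewrite !mxE.
  - by rewrite fbb; ring.
  - by ring.
  - by ring.
  - by rewrite fbb; ring.
pose Pihat := T *m M *m adjmx T.
exists Pihat; split.
  split; first by rewrite /Pihat !adjmxM adjmxK hM mulmxA.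
  by rewrite /Pihat !mulmxA -[T *m M *m adjmx T *m T]mulmxA TT mulmx1 -[T *m M *m M]mulmxA MM.
have trP : forall sg, \tr (Pihat *m embed l'.+1 sg) = \tr (Gm U va *m sg).
  move=> sg; rewrite /Pihat /embed /T /M adjmx_block adjmx1 !adjmx0 adjmxK.
  rewrite !mulmx_block !mulmx0 !mul0mx !mulmx1 !mul1mx !addr0 !add0r.
  by rewrite mxtrace_block mxtrace0 addr0.
have beta : (1 - alpha) / alpha = c^-1.
  by rewrite /c invf_div.
split; last first.
  move=> sg [psg _]; rewrite trP.
  have -> : \sum_i \tr (Pi i *m sg) = \tr (S *m sg) by rewrite /S mulmx_suml raddf_sum.
  rewrite -subr_ge0 -mxtraceZ scalemxAl -raddfB /= -mulmxBl.
  apply: tr_psd => //; rewrite eS Gm_scale Gm_sub; apply: Gm_psd => k.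
  rewrite !mxE beta /fa [c^-1 * _]mulrC -mulrBr mulr_ge0 // subr_ge0 lef_pV2 ?posrE //.
  by rewrite lerDr.
move=> i; rewrite trP.
pose t := 1 - alpha.
have hct : t * (1 + c) = 1.
  rewrite /t /c; have h : 1 - alpha != 0 by rewrite gt_eqF.
  by field.
have [hP PP] := hPi i.
pose E := S - Pi i.
have pE : is_psd E.
  have -> : E = \sum_(j | j != i) Pi j by rewrite /E /S (bigD1 i) //= addrC addrK.
  by apply: psd_sum => j _; exact: psd_proj.
have hE : adjmx E = E by case: pE.
pose X := c *: 1%:M + 1 *: Pi i.
pose Xi := c^-1 *: 1%:M + (- (c^-1 * t)) *: Pi i.
have c0' : c != 0 by rewrite gt_eqF.
have XiX : Xi *m X = 1%:M.
  rewrite /X /Xi lc_mul // mulVf //.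
  have -> : c^-1 * 1 + - (c^-1 * t) * c + - (c^-1 * t) * 1 = 0.
    transitivity (c^-1 * (1 - t * (1 + c))); first by field.
    by rewrite hct subrr mulr0.
  by rewrite scale0r addr0 scale1r.
have XXi : X *m Xi = 1%:M.
  rewrite /X /Xi lc_mul // mulfV //.
  have -> : c * - (c^-1 * t) + 1 * c^-1 + 1 * - (c^-1 * t) = 0.
    transitivity (c^-1 * (1 - t * (1 + c))); first by field.
    by rewrite hct subrr mulr0.
  by rewrite scale0r addr0 scale1r.
have pXi : is_psd Xi.
  have -> : Xi = c^-1 *: (1%:M - Pi i) + (c^-1 * alpha) *: Pi i.
    by apply/matrixP => a b; rewrite /Xi /t !mxE; ring.
  have pr : is_proj (1%:M - Pi i).
    split; first by rewrite adjmxB adjmx1 hP.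
    by rewrite mulmxBl !mulmxBr !mul1mx !mulmx1 PP subrr subr0.
  apply: psd_add; apply: psd_scale; rewrite ?mulr_ge0 ?invr_ge0 ?ltW //;
  exact: psd_proj.
pose vy := \row_k (s 0 k + c)^-1; pose vY := \row_k (s 0 k + c).
pose Y := Gm U vY; pose Yi := Gm U vy.
have YiY : Yi *m Y = 1%:M.
  rewrite /Y /Yi Gm_mul // -(Gm_one (n:=d) uU); congr Gm; apply/rowP => k.
  by rewrite !mxE mulVf // lt0r_neq0.
have YYi : Y *m Yi = 1%:M.
  rewrite /Y /Yi Gm_mul // -(Gm_one (n:=d) uU); congr Gm; apply/rowP => k.
  by rewrite !mxE mulfV // lt0r_neq0.
have hYi : adjmx Yi = Yi.
  by apply: Gm_herm => k; rewrite mxE ger0_real // invr_ge0 ltW.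
have YE : Y - X = E.
  have -> : Y = S + c *: 1%:M.
    rewrite eS -(Gm_one (n:=d) uU) Gm_scale Gm_add; congr Gm; apply/rowP => k.
    by rewrite !mxE mulr1.
  by rewrite /X /E scale1r opprD addrA addrK.
have eGa : Gm U va = 1%:M - c *: Yi.
  rewrite -(Gm_one (n:=d) uU) Gm_scale Gm_sub; congr Gm; apply/rowP => k.
    by rewrite !mxE fa1'.
have cXi : c *: Xi = 1%:M - t *: Pi i.
  rewrite /Xi scalerDr !scalerA mulfV // scale1r mulrN mulrA mulfV // mul1r scaleNr.
  by [].
have key : Gm U va - t *: Pi i = c *: (Yi *m (E + E *m Xi *m E) *m Yi).
  rewrite -YE key_id // key_id2 // scalerBr cXi eGa.
  by rewrite addrAC.
have pkey : is_psd (Gm U va - t *: Pi i).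
  rewrite key; apply: psd_scale; first exact: ltW.
  have := psd_congr Yi (psd_add pE (psd_congr E pXi)); rewrite hYi hE.
  by [].
have h0 := tr_psd pkey (hrho i).1.
rewrite mulmxBl raddfB /= -scalemxAl mxtraceZ subr_ge0 in h0.
apply: le_trans h0.
apply: (@le_trans _ _ (t * (1 - eps))).
  rewrite -subr_ge0; have -> : t * (1 - eps) - (1 - eps - alpha) = alpha * eps.
    by rewrite /t; ring.
  by rewrite mulr_ge0 // ltW.
by rewrite ler_wpM2l // ltW.
Qed.
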